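(* Let $R$ be a commutative ring with $2=0$, let $\mathcal{G}$ be the complete quadrilateral with points $a,b,c,x,y,z$ and lines $\ell_1=\{a,b,c\}$, $\ell_2=\{b,x,z\}$, $\ell_3=\{a,y,z\}$, $\ell_4=\{c,x,y\}$, and let $A=M_R(\mathcal{G},1)$. Put $\ell=\ell_1$ and $s=a+b+c+x+y+z$, and consider the $R$-basis $\mathcal{B}=(a,\ b,\ \ell,\ \ell x,\ \ell y,\ s)$ of $A$, where $\ell x=b+c+y+z$ and $\ell y=a+c+x+z$. For $\lambda\in R^\times$ and $i\in\{1,2,3,4\}$ let $\tau_{\ell_i,\lambda}=\mathrm{id}+(1+\lambda)\operatorname{ad}_{\ell_i}$. Then, with respect to $\mathcal{B}$ (the $j$-th column giving the coordinates of the image of the $j$-th basis vector), \[ \tau_{\ell_1,\lambda}=S_{0,0,\lambda},\quad \tau_{\ell_2,\lambda}=S_{1+\lambda,0,\lambda},\quad \tau_{\ell_3,\lambda}=S_{0,1+\lambda,\lambda},\quad \tau_{\ell_4,\lambda}=S_{1+\lambda,1+\lambda,\lambda}. \]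
   Context: For distinct collinear points $p,q$ (written $p\sim q$), $p\wedge q$ is the third point of their line. The nilpotent Matsuo algebra $A=M_R(\mathcal{G},1)$ is the free $R$-module with basis the points and commutative bilinear product $p\cdot q=0$ if $p=q$ or $p\not\sim q$, $p\cdot q=p+q+p\wedge q$ if $p\sim q$; a line is identified with the sum of its three points, and $\operatorname{ad}_{\ell}(v)=\ell v$. For $\alpha,\beta\in R$, $M_{\alpha,\beta}=\begin{pmatrix}\alpha&0&\beta\\0&\beta&\alpha\\0&0&0\end{pmatrix}$, and for $\lambda\in R^\times$, $S_{\alpha,\beta,\lambda}$ is the $6\times6$ block matrix $\begin{pmatrix}I_3&O_3\\ M_{\alpha,\beta}&\operatorname{diag}(\lambda,\lambda,1)\end{pmatrix}$ with $I_3$ the identity and $O_3$ the zero $3\times3$ matrix. *)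

(* Defs.v *)
From HB Require Import structures.
From mathcomp Require Import all_boot all_order all_algebra.
Set Implicit Arguments. Unset Strict Implicit. Unset Printing Implicit Defensive.
Import GRing.Theory.
Local Open Scope ring_scope.

Definition pt := 'I_6.
Definition pa : pt := inord 0.
Definition pb : pt := inord 1.
Definition pc : pt := inord 2.
Definition px : pt := inord 3.
Definition py : pt := inord 4.
Definition pz : pt := inord 5.

(* Lines l1 = {a,b,c}, l2 = {b,x,z}, l3 = {a,y,z}, l4 = {c,x,y}; index i : 'I_4 <-> l_(i+1). *)
Definition line (i : 'I_4) : {set pt} :=
  match val i with
  | 0 => [set pa; pb; pc]
  | 1 => [set pb; px; pz]
  | 2 => [set pa; py; pz]
  | _ => [set pc; px; py]
  end.

Definition collinear (p q : pt) : bool :=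
  (p != q) && [exists i, (p \in line i) && (q \in line i)].

Definition wedge (p q : pt) : pt :=
  odflt p [pick r | [&& r != p, r != q & [exists i, [&& p \in line i, q \in line i & r \in line i]]]].

Section Matsuo.
Variable R : comPzRingType.

(* A = M_R(G,1): the free R-module with basis the points, elements as row vectors *)
Definition A := 'rV[R]_6.
Definition ept (p : pt) : A := delta_mx 0 p.

Definition pprod (p q : pt) : A :=
  if collinear p q then ept p + ept q + ept (wedge p q) else 0.

Definition amul (v w : A) : A :=
  \sum_(p : pt) \sum_(q : pt) (v 0 p * w 0 q) *: pprod p q.

Definition lineV (i : 'I_4) : A := \sum_(p in line i) ept p.

Definition ad (u v : A) : A := amul u v.

Definition tau (i : 'I_4) (lam : R) (v : A) : A := v + (1 + lam) *: ad (lineV i) v.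

Definition sV : A := \sum_(p : pt) ept p.

Definition basisB (j : 'I_6) : A :=
  match val j with
  | 0 => ept pa
  | 1 => ept pb
  | 2 => lineV (inord 0)
  | 3 => amul (lineV (inord 0)) (ept px)
  | 4 => amul (lineV (inord 0)) (ept py)
  | _ => sV
  end.

Definition Mab (al be : R) : 'M[R]_3 :=
  \matrix_(i < 3, j < 3)
    match val i, val j with
    | 0, 0 => al | 0, 2 => be
    | 1, 1 => be | 1, 2 => al
    | _, _ => 0
    end.

Definition diag3 (lam : R) : 'M[R]_3 :=
  \matrix_(i < 3, j < 3) (if i == j then (if val i == 2%N then 1 else lam) else 0).

Definition Smx (al be lam : R) : 'M[R]_(3 + 3) :=
  block_mx 1%:M 0 (Mab al be) (diag3 lam).

Definition has_matrix (f : A -> A) (M : 'M[R]_(3 + 3)) : Prop :=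
  forall j : 'I_6, f (basisB j) = \sum_(k < 6) M k j *: basisB k.

End Matsuo.

(* Main.v *)
Require Import Defs.
From mathcomp Require Import all_boot all_order all_algebra.
From mathcomp Require Import ring.
Import GRing.Theory.
Local Open Scope ring_scope.

Definition linb (i x : nat) : bool :=
  match i with
  | 0 => (x == 0)%N || (x == 1)%N || (x == 2)%N
  | 1 => (x == 1)%N || (x == 3)%N || (x == 5)%N
  | 2 => (x == 0)%N || (x == 4)%N || (x == 5)%N
  | _ => (x == 2)%N || (x == 3)%N || (x == 4)%N
  end.

Lemma mem_line (i : 'I_4) (x : pt) : (x \in line i) = linb i x.
Proof.
case: i => [[|[|[|i]]] hi]; rewrite /line /= !inE -!val_eqE /= !inordK //.
Qed.

Definition collb (p q : nat) : bool :=
  (p != q) && has (fun i => linb i p && linb i q) (iota 0 4).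

Lemma collinearE (p q : pt) : collinear p q = collb p q.
Proof.
rewrite /collinear /collb -val_eqE; congr (_ && _).
apply/existsP/hasP => [[i /andP[pi qi]] | [i]].
  by exists (val i); rewrite ?mem_iota ?ltn_ord // -!mem_line pi qi.
rewrite mem_iota /= add0n => hi /andP[pi qi].
by exists (Ordinal hi); rewrite !mem_line pi qi.
Qed.

Definition wedgeP (p q r : nat) : bool :=
  (r != p) && (r != q) && has (fun i => linb i p && linb i q && linb i r) (iota 0 4).

Definition wedgeb (p q : nat) : nat := head 0%N [seq r <- iota 0 6 | wedgeP p q r].

Definition F1 : bool :=
  all (fun p => all (fun q => all (fun r =>
     collb p q ==> wedgeP p q r ==> (r == wedgeb p q)) (iota 0 6)) (iota 0 6)) (iota 0 6).
Lemma F1T : F1. Proof. by vm_compute. Qed.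
Definition F2 : bool :=
  all (fun p => all (fun q => collb p q ==> (wedgeb p q < 6)%N && wedgeP p q (wedgeb p q))
     (iota 0 6)) (iota 0 6).
Lemma F2T : F2. Proof. by vm_compute. Qed.

Lemma wedgePE (p q r : pt) :
  [&& r != p, r != q & [exists i, [&& p \in line i, q \in line i & r \in line i]]]
  = wedgeP p q r.
Proof.
rewrite /wedgeP -!val_eqE -andbA; congr [&& _, _ & _].
apply/existsP/hasP => [[i /and3P[pi qi ri]] | [i]].
  by exists (val i); rewrite ?mem_iota ?ltn_ord // -!mem_line pi qi ri.
rewrite mem_iota /= add0n => hi /andP[/andP[pi qi] ri].
by exists (Ordinal hi); rewrite !mem_line pi qi ri.
Qed.

Lemma wedgeE (p q : pt) : collb p q -> val (wedge p q) = wedgeb p q.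
Proof.
move=> C; rewrite /wedge; case: pickP => [r | H] /=.
  rewrite wedgePE => W.
  have := F1T; move/allP/(_ p); rewrite mem_iota ltn_ord => /(_ isT).
  move/allP/(_ q); rewrite mem_iota ltn_ord => /(_ isT).
  by move/allP/(_ r); rewrite mem_iota ltn_ord => /(_ isT); rewrite C W => /eqP.
have := F2T; move/allP/(_ p); rewrite mem_iota ltn_ord => /(_ isT).
move/allP/(_ q); rewrite mem_iota ltn_ord => /(_ isT); rewrite C /=.
case/andP => hw W; have := H (Ordinal hw); rewrite wedgePE /= W //.
Qed.

Definition cntN (p q k : nat) : nat :=
  if collb p q then ((p == k) + (q == k) + (wedgeb p q == k))%N else 0%N.

Definition nsumN (G : nat -> nat) : nat := foldr (fun i a => G i + a)%N 0%N (iota 0 6).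

Lemma sumE (G : nat -> nat) : (\sum_(p < 6) G p)%N = nsumN G.
Proof. by rewrite -(big_mkord xpredT G) unlock. Qed.

Definition nmulN (f g : nat -> nat) (k : nat) : nat :=
  nsumN (fun p => nsumN (fun q => f p * g q * cntN p q k))%N.

Section V.
Variable R : comUnitRingType.
Variable lam : R.

Definition vec (f : nat -> nat) : A R := \row_(k < 6) (f k)%:R.

Lemma pprodE (p q k : pt) : pprod R p q 0 k = (cntN p q k)%:R.
Proof.
rewrite /pprod collinearE /cntN; case: ifP => C; last by rewrite mxE.
rewrite !mxE eqxx /= !natrD; congr (_ + _ + _); rewrite eq_sym -val_eqE //.
by rewrite wedgeE.
Qed.

Lemma amulE f g : amul (vec f) (vec g) = vec (nmulN f g).
Proof.
apply/rowP => k; rewrite /amul summxE mxE.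
under eq_bigr => p _ do rewrite summxE.
under eq_bigr => p _ do under eq_bigr => q _ do rewrite !mxE pprodE -!natrM.
under eq_bigr => p _ do rewrite -natr_sum (sumE (fun q => f p * g q * cntN p q k)%N).
by rewrite -natr_sum (sumE (fun p => nsumN (fun q => f p * g q * cntN p q k)))%N.
Qed.

Lemma eptE (p : pt) : ept R p = vec (fun k => nat_of_bool (val p == k)).
Proof. by apply/rowP => k; rewrite !mxE eqxx /= eq_sym -val_eqE. Qed.

Lemma lineVE (i : 'I_4) : lineV R i = vec (fun k => nat_of_bool (linb i k)).
Proof.
apply/rowP => k; rewrite /lineV summxE big_mkcond (bigD1 k) //= big1 => [|p /negbTE pk].
  by rewrite !mxE eqxx /= addr0 eqxx -mem_line; case: (k \in line i).
by case: ifP => // _; rewrite !mxE eqxx /= eq_sym pk.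
Qed.

Lemma sVE : sV R = vec (fun _ => 1%N).
Proof.
apply/rowP => k; rewrite /sV summxE (bigD1 k) //= big1 => [|p /negbTE pk].
  by rewrite !mxE eqxx /= addr0 eqxx.
by rewrite !mxE eqxx /= eq_sym pk.
Qed.

End V.

Definition linN (i : nat) (k : nat) : nat := nat_of_bool (linb i k).
Definition bBN (j : nat) : nat -> nat :=
  match j with
  | 0 => fun k => nat_of_bool (0 == k)%N
  | 1 => fun k => nat_of_bool (1 == k)%N
  | 2 => linN 0
  | 3 => nmulN (linN 0) (fun k => nat_of_bool (3 == k)%N)
  | 4 => nmulN (linN 0) (fun k => nat_of_bool (4 == k)%N)
  | _ => fun _ => 1%N
  end.

Definition Ma (ta tb : bool) (k j : nat) : nat :=
  match k, j with
  | 0, 0 | 1, 1 | 2, 2 | 5, 5 => 1%N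
  | 3, 0 | 4, 2 => nat_of_bool ta
  | 3, 2 | 4, 1 => nat_of_bool tb
  | _, _ => 0%N
  end.
Definition Mb (ta tb : bool) (k j : nat) : nat :=
  match k, j with
  | 3, 3 | 4, 4 => 1%N
  | 3, 0 | 4, 2 => nat_of_bool ta
  | 3, 2 | 4, 1 => nat_of_bool tb
  | _, _ => 0%N
  end.

Section W.
Variable R : comUnitRingType.
Variable lam : R.

Lemma basisBE (j : 'I_6) : basisB R j = vec R (bBN j).
Proof.
case: j => [[|[|[|[|[|[|j]]]]]] hj] //; rewrite /basisB /=
  ?eptE ?lineVE ?sVE ?amulE ?eptE ?lineVE /= ?inordK //.
Qed.

Lemma tauE (i : 'I_4) f :
  tau i lam (vec R f) = \row_(k < 6) ((f k + nmulN (linN i) f k)%:R + (nmulN (linN i) f k)%:R * lam).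
Proof.
rewrite /tau /ad lineVE amulE; apply/rowP => k; rewrite !mxE natrD /linN; ring.
Qed.

Lemma SmxE (ta tb : bool) (k j : 'I_6) :
  Smx (ta%:R + ta%:R * lam) (tb%:R + tb%:R * lam) lam k j
  = (Ma ta tb k j)%:R + (Mb ta tb k j)%:R * lam.
Proof.
rewrite /Smx /block_mx mxE; case: splitP => k' hk; rewrite mxE; case: splitP => j' hj;
  rewrite !mxE hk hj; case: k' {hk} => [[|[|[|k']]] hk] //; case: j' {hj} => [[|[|[|j']]] hj] //=;
  case: ta; case: tb; rewrite /= ?mulr0n ?mulr1n; ring.
Qed.

End W.

Definition checkN (i : nat) (ta tb : bool) : bool :=
  all (fun j => all (fun k =>
    ((bBN j k + nmulN (linN i) (bBN j) k) %% 2 ==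
       nsumN (fun n => Ma ta tb n j * bBN n k) %% 2)%N &&
    (nmulN (linN i) (bBN j) k %% 2 == nsumN (fun n => Mb ta tb n j * bBN n k) %% 2)%N)
   (iota 0 6)) (iota 0 6).

Lemma mod2E (R : comUnitRingType) (h2 : (2%:R : R) = 0) (a b : nat) :
  (a %% 2 = b %% 2)%N -> (a%:R : R) = b%:R.
Proof.
move=> E; by rewrite (divn_eq a 2) (divn_eq b 2) E !natrD !natrM h2 !mulr0 !add0r.
Qed.

Lemma mainL (R : comUnitRingType) (h2 : (2%:R : R) = 0) (lam : R) (i : 'I_4) (ta tb : bool) :
  checkN i ta tb ->
  has_matrix (tau i lam) (Smx (ta%:R + ta%:R * lam) (tb%:R + tb%:R * lam) lam).
Proof.
move=> H j; rewrite basisBE tauE.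
under eq_bigr => k' _ do rewrite basisBE.
apply/rowP => k; rewrite summxE !mxE.
under eq_bigr => k' _ do rewrite SmxE !mxE.
rewrite (eq_bigr (fun k' : 'I_6 => (Ma ta tb k' j * bBN k' k)%:R + (Mb ta tb k' j * bBN k' k)%:R * lam));
  last by move=> k' _; rewrite !natrM; ring.
rewrite big_split /= -mulr_suml -!natr_sum (sumE (fun n => Ma ta tb n j * bBN n k)%N)
  (sumE (fun n => Mb ta tb n j * bBN n k)%N).
move/allP: H => /(_ j); rewrite mem_iota ltn_ord => /(_ isT) /allP /(_ k).
rewrite mem_iota ltn_ord => /(_ isT) /andP[/eqP E1 /eqP E2].
by rewrite (mod2E _ h2 _ _ E1) (mod2E _ h2 _ _ E2).
Qed.

Theorem lemma6p9 (R : comUnitRingType) (h2 : (2%:R : R) = 0) (lam : R)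
    (hlam : lam \is a GRing.unit) :
  [/\ has_matrix (tau (inord 0) lam) (Smx 0 0 lam),
      has_matrix (tau (inord 1) lam) (Smx (1 + lam) 0 lam),
      has_matrix (tau (inord 2) lam) (Smx 0 (1 + lam) lam)
    & has_matrix (tau (inord 3) lam) (Smx (1 + lam) (1 + lam) lam)].
Proof.
have E0 : (0 : R) = false%:R + false%:R * lam by rewrite /= mul0r addr0.
have E1 : (1 + lam : R) = true%:R + true%:R * lam by rewrite /= mul1r.
rewrite E1 !E0; split; apply: mainL => //; rewrite inordK //; vm_compute; reflexivity.
Qed.
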